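(* Under the Standing Setup and Assumption (G) described in the context, suppose there exists exactly one $a\in V_k$ such that $\mathcal{E}(f\oplus\varphi_a)\neq0$. Then $$\mathcal{E}(PC_{f,\mathcal{T}})=\big[\mathcal{E}(f\oplus\varphi_a)\big]^{2^s}.$$ In particular, if $f$ is $(k-1)$-resilient, then $\mathcal{E}(PC_{f,\mathcal{T}})=\big[\mathcal{E}(f\oplus\varphi_{1_k})\big]^{2^s}$, where $1_k\in\mathbf{F}_2^n$ has its first $k$ coordinates equal to $1$ and the others equal to $0$.
   Context: Standing Setup. $f:\mathbf{F}_2^n\to\mathbf{F}_2$ is a Boolean function. $\mathbf{x}_1,\ldots,\mathbf{x}_n$ are binary sequences, $\mathbf{x}_j=(x_j(t))_{t\ge0}$, with $\mathbf{x}_j$ periodic of period $T_j$, i.e. $x_j(t)=x_j(t \bmod T_j)$. Let $s\ge1$ and integers $0=\ell_1<\ell_2<\cdots<\ell_{s+1}=k\le n$; variable $j$ belongs to block $i$ if $\ell_i<j\le\ell_{i+1}$. For $1\le i\le s$, $M_i=q_i\,\mathrm{lcm}(T_{\ell_i+1},\ldots,T_{\ell_{i+1}})$ with $q_i$ a positive integer. For $c=\sum_{i=1}^s c_i2^{i-1}\in\{0,\ldots,2^s-1\}$ with $c_i\in\{0,1\}$, put $\tau_c=\sum_{i=1}^s c_iM_i$, and $\mathcal{T}=\{\tau_c\}$. The parity-check sequence is $PC_{f,\mathcal{T}}(t)=\bigoplus_{c=0}^{2^s-1} f\big(x_1(t+\tau_c),\ldots,x_n(t+\tau_c)\big)$.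 The bias of a Boolean function $h$ of $m$ variables is $\mathcal{E}(h)=2^{-m}\sum_{x\in\mathbf{F}_2^m}(-1)^{h(x)}$. The bias $\mathcal{E}(PC_{f,\mathcal{T}})$ is the bias of $PC_{f,\mathcal{T}}(t)$ (for a fixed $t\ge0$) viewed as a Boolean function of the $T_1+\cdots+T_n$ bits $x_j(0),\ldots,x_j(T_j-1)$, $1\le j\le n$; equivalently $\mathbb{E}[(-1)^{PC_{f,\mathcal{T}}(t)}]$ when these bits are independent and uniform. Assumption (G): (i) for every $j$ with $k<j\le n$, the $2^s$ integers $\tau_c$ are pairwise incongruent modulo $T_j$; (ii) for every $i\in\{1,\ldots,s\}$ and every $j$ in block $i$, the $2^{s-1}$ integers $\sum_{l\ne i}c_lM_l$ ($c_l\in\{0,1\}$) are pairwise incongruent modulo $T_j$. $V_k\subseteq\mathbf{F}_2^n$ is the subspace spanned by the first $k$ standard basis vectors. For $\beta\in\mathbf{F}_2^n$, $\varphi_\beta$ is the linear function $x\mapsto\beta\cdot x$. A Boolean function $f$ of $n$ variables is $t$-resilient if $\mathcal{E}(f\oplus\varphi_\beta)=0$ for every $\beta\in\mathbf{F}_2^n$ of Hamming weight at most $t$ (equivalently, $f$ is balanced and its output distribution is unchanged when any $t$ inputs are fixed). *)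

(* Defs.v *)
From HB Require Import structures.
From mathcomp Require Import all_boot all_order all_algebra.
Set Implicit Arguments. Unset Strict Implicit. Unset Printing Implicit Defensive.
Import Order.TTheory GRing.Theory Num.Theory.

(* Conventions: variables are 0-based, j : 'I_n stands for x_{j+1};
   blocks are 0-based, i < s stands for block i+1.
   Booleans represent F_2. *)

Local Open Scope ring_scope.

Definition bias (A : finType) (h : A -> bool) : rat :=
  (\sum_(a : A) (-1) ^+ h a) / #|A|%:R.

Definition dotb n (beta x : {ffun 'I_n -> bool}) : bool :=
  \big[addb/false]_(i < n) (beta i && x i).

Definition inVk n k (a : {ffun 'I_n -> bool}) : bool :=
  [forall i : 'I_n, (k <= i)%N ==> ~~ a i].

Definition onek n k : {ffun 'I_n -> bool} := [ffun i : 'I_n => (i < k)%N].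

Definition hweight n (b : {ffun 'I_n -> bool}) : nat := #|[set i | b i]|.

Definition resilient n (f : {ffun 'I_n -> bool} -> bool) (t : nat) : Prop :=
  forall beta : {ffun 'I_n -> bool}, (hweight beta <= t)%N ->
    bias (fun x => f x (+) dotb beta x) = 0.

(* The random initial bits: x_j(0), ..., x_j(T_j - 1) for each j. *)
Definition bitsT n (T : nat -> nat) : finType := {j : 'I_n & 'I_(T j)}.
Definition Bits n (T : nat -> nat) := {ffun bitsT n T -> bool}.

(* Value of the periodic sequence x_j at time t: x_j(t) = x_j(t mod T_j). *)
Definition xval n (T : nat -> nat) (X : Bits n T) (j : 'I_n) (t : nat) : bool :=
  match @insub nat (fun m => (m < T j)%N) 'I_(T j) (t %% T j)%N with
  | Some i => X (Tagged (fun j : 'I_n => 'I_(T j)) i)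
  | None => false
  end.

(* M_i = q_i * lcm(T_j : j in block i), block i = { j | l i <= j < l (i+1) } *)
Definition Mblk (T q l : nat -> nat) (i : nat) : nat :=
  (q i * \big[lcmn/1%N]_(l i <= j < l i.+1) T j)%N.

Definition tau s (T q l : nat -> nat) (c : {ffun 'I_s -> bool}) : nat :=
  (\sum_(i < s) c i * Mblk T q l i)%N.

Definition PC n s (T q l : nat -> nat) (f : {ffun 'I_n -> bool} -> bool)
    (X : Bits n T) (t : nat) : bool :=
  \big[addb/false]_(c : {ffun 'I_s -> bool})
     f [ffun j : 'I_n => xval X j (t + tau T q l c)].

Definition assumptionG n k s (T q l : nat -> nat) : Prop :=
  (forall j : nat, (k <= j < n)%N ->
     forall c1 c2 : {ffun 'I_s -> bool},
       tau T q l c1 = tau T q l c2 %[mod T j] -> c1 = c2)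
  /\
  (forall i : 'I_s, forall j : nat, (l i <= j < l i.+1)%N ->
     forall c1 c2 : {ffun 'I_s -> bool}, c1 i = false -> c2 i = false ->
       tau T q l c1 = tau T q l c2 %[mod T j] -> c1 = c2).

(* Main.v *)
Require Import Defs.
From HB Require Import structures.
From mathcomp Require Import all_boot all_order all_algebra.
Set Implicit Arguments. Unset Strict Implicit. Unset Printing Implicit Defensive.
Import Order.TTheory GRing.Theory Num.Theory.
Local Open Scope ring_scope.

Definition sgn (b : bool) : rat := (-1) ^+ b.

Lemma sgn_addb b1 b2 : sgn (b1 (+) b2) = sgn b1 * sgn b2.
Proof. exact: signr_addb. Qed.

Lemma sgn_bigxor (I : finType) (P : pred I) (F : I -> bool) :
  sgn (\big[addb/false]_(i | P i) F i) = \prod_(i | P i) sgn (F i).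
Proof. by apply: (big_morph sgn sgn_addb). Qed.

Lemma flip_inj (P : finType) (p0 : P) :
  injective (fun X : {ffun P -> bool} => [ffun p => if p == p0 then ~~ X p else X p]).
Proof.
move=> X Y /ffunP H; apply/ffunP => p; have := H p; rewrite !ffunE.
by case: eqP => _ //; case: (X p); case: (Y p).
Qed.

Lemma orth (P : finType) (w : {ffun P -> bool}) :
  \sum_(X : {ffun P -> bool}) sgn (\big[addb/false]_(p : P) (w p && X p))
  = if [forall p, ~~ w p] then #|{ffun P -> bool}|%:R else 0.
Proof.
case: ifP => [/forallP Hw | /forallP Hw].
  rewrite -sum1_card natr_sum; apply: eq_bigr => X _.
  by rewrite big1 // => p _; rewrite (negbTE (Hw p)).
have [p0 Hp0] : exists p0, w p0.
  by apply/existsP; apply: contraT; rewrite negb_exists => /forallP.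
set S := \sum_X _.
have HS : S = - S.
  rewrite {1}/S (reindex_inj (@flip_inj _ p0)) /S -sumrN; apply: eq_bigr => X _.
  rewrite (bigD1 p0) //= [in RHS](bigD1 p0) //= ffunE eqxx Hp0 /=.
  rewrite (eq_bigr (fun p => w p && X p)); last first.
    by move=> p /negbTE Hp; rewrite ffunE Hp.
  by rewrite -[~~ X p0]addTb -addbA sgn_addb /sgn expr1 mulN1r.
have : S *+ 2 == 0 by rewrite mulr2n {1}HS addNr.
by rewrite mulrn_eq0 /= => /eqP.
Qed.

Lemma dotb_xor n (b x y : {ffun 'I_n -> bool}) :
  dotb b x (+) dotb b y = \big[addb/false]_i ([ffun i => x i (+) y i] i && b i).
Proof.
rewrite /dotb -big_split /=; apply: eq_bigr => i _.
by rewrite ffunE -andb_addr andbC.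
Qed.

Lemma card_pos (A : finType) (a : A) : (#|A|%:R : rat) != 0.
Proof. by rewrite pnatr_eq0 -lt0n; apply/card_gt0P; exists a. Qed.

Lemma inversion n (f : {ffun 'I_n -> bool} -> bool) (y : {ffun 'I_n -> bool}) :
  sgn (f y) = \sum_b bias (fun x => f x (+) dotb b x) * sgn (dotb b y).
Proof.
rewrite /bias.
under eq_bigr => b _ do rewrite mulrAC mulrC mulr_suml.
rewrite -mulr_sumr exchange_big /=.
under eq_bigr => x _.
  under eq_bigr => b _ do
    rewrite -/(sgn _) sgn_addb -mulrA -sgn_addb dotb_xor.
  rewrite -mulr_sumr orth.
  over.
rewrite (bigD1 y) //= big1; last first.
  move=> x Hx; case: ifP; last by rewrite mulr0.
  move/forallP => H; case/eqP: Hx; apply/ffunP => i; have := H i.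
  by rewrite ffunE; case: (x i); case: (y i).
rewrite addr0 (_ : [forall i, _] = true); last first.
  by apply/forallP => i; rewrite ffunE addbb.
by rewrite mulrCA mulVf ?mulr1 // (card_pos y).
Qed.

Definition mvec n s (T q l : nat -> nat) (t : nat)
  (phi : {ffun {ffun 'I_s -> bool} -> {ffun 'I_n -> bool}}) : {ffun bitsT n T -> bool} :=
  [ffun p => \big[addb/false]_(c : {ffun 'I_s -> bool})
     (phi c (tag p) && ((t + tau T q l c) %% T (tag p) == val (tagged p))%N)].
Arguments mvec : clear implicits.

Lemma xor_rearrange n s (T q l : nat -> nat) (HT : forall j : nat, (j < n)%N -> (0 < T j)%N)
  (t : nat) (phi : {ffun {ffun 'I_s -> bool} -> {ffun 'I_n -> bool}}) (X : Bits n T) :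
  \big[addb/false]_(c : {ffun 'I_s -> bool})
     dotb (phi c) [ffun j : 'I_n => xval X j (t + tau T q l c)]
  = \big[addb/false]_(p : bitsT n T) (mvec n s T q l t phi p && X p).
Proof.
under [RHS]eq_bigr => p _ do rewrite ffunE big_distrl /=.
rewrite [RHS]exchange_big /=; apply: eq_bigr => c _.
rewrite (partition_big (fun p : bitsT n T => tag p) xpredT) //=.
apply: eq_bigr => j _.
have Hr : ((t + tau T q l c) %% T j < T j)%N by rewrite ltn_pmod // HT.
pose p0 : bitsT n T := Tagged (fun j : 'I_n => 'I_(T j)) (Ordinal Hr).
rewrite (bigD1 p0) /=; last by rewrite eqxx.
rewrite big1 ?addbF; last first.
  case=> j' r /andP[/eqP /= Ej Hne]; subst j'.
  case: eqP; rewrite ?andbF ?andFb //= => Er.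
  case/eqP: Hne; rewrite /p0; congr Tagged; apply: val_inj => /=; by rewrite Er.
rewrite ffunE eqxx andbT /xval insubT /=.
done.
Qed.

Lemma bias_PC_formula n s (T q l : nat -> nat) (HT : forall j : nat, (j < n)%N -> (0 < T j)%N)
  (f : {ffun 'I_n -> bool} -> bool) (t : nat) :
  bias (fun X : Bits n T => PC s q l f X t)
  = \sum_(phi : {ffun {ffun 'I_s -> bool} -> {ffun 'I_n -> bool}})
      (\prod_c bias (fun x => f x (+) dotb (phi c) x)) *
      (if [forall p, ~~ mvec n s T q l t phi p] then 1 else 0).
Proof.
rewrite /bias.
under eq_bigr => X _.
  rewrite -/(sgn _) /PC sgn_bigxor.
  under eq_bigr => c _ do rewrite inversion.
  rewrite bigA_distr_bigA /=.
  under eq_bigr => phi _ do rewrite big_split /= -sgn_bigxor xor_rearrange //.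
  over.
rewrite exchange_big /= mulr_suml; apply: eq_bigr => phi _.
rewrite -mulr_sumr orth -mulrA; congr (_ * _).
case: ifP => _; last by rewrite mul0r.
by rewrite mulfV // (card_pos [ffun _ => false]).
Qed.

Lemma block_exists (l : nat -> nat) (s j : nat) :
  l 0%N = 0%N -> (j < l s)%N -> exists i, [&& (i < s)%N, (l i <= j)%N & (j < l i.+1)%N].
Proof.
move=> Hl0; elim: s => [|s IH]; first by rewrite Hl0.
move=> Hj; case: (ltnP j (l s)) => Hjs.
  by case: (IH Hjs) => i /and3P[H1 H2 H3]; exists i; rewrite H2 H3 ltnS ltnW.
by exists s; rewrite ltnSn Hjs Hj.
Qed.

Lemma dvd_Mblk (T q l : nat -> nat) (i j : nat) :
  (l i <= j)%N -> (j < l i.+1)%N -> (T j %| Mblk T q l i)%N.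
Proof.
move=> H1 H2; rewrite /Mblk dvdn_mull //.
rewrite (@big_cat_nat _ _ _ j) ?(ltnW H2) //= (big_ltn H2) /=.
by apply: dvdn_trans (dvdn_lcmr _ _); apply: dvdn_lcml.
Qed.

Definition flipc s (i : 'I_s) (c : {ffun 'I_s -> bool}) : {ffun 'I_s -> bool} :=
  [ffun i' => if i' == i then ~~ c i' else c i'].

Lemma parity s (i : 'I_s) (g : {ffun 'I_s -> bool} -> bool) :
  (forall c, g (flipc i c) = g c) -> \big[addb/false]_c g c = false.
Proof.
move=> Hg; rewrite (bigID (fun c : {ffun 'I_s -> bool} => c i)) /= (reindex_inj (@flip_inj _ i)) /=.
rewrite (eq_bigl (fun c : {ffun 'I_s -> bool} => ~~ c i)); last by move=> c; rewrite ffunE eqxx.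
rewrite (eq_bigr g) ?addbb // => c _; exact: Hg.
Qed.

Lemma tau_flip s (T q l : nat -> nat) (i : 'I_s) (j : nat) c :
  (T j %| Mblk T q l i)%N ->
  (tau T q l (flipc i c) = tau T q l c %[mod T j])%N.
Proof.
move=> Hd.
have E : forall c', (tau T q l c' = \sum_(i' < s | i' != i) c' i' * Mblk T q l i' %[mod T j])%N.
  move=> c'; rewrite /tau (bigD1 i) //=.
  by rewrite -(divnK Hd) mulnA modnMDl.
rewrite !E; congr (_ %% _)%N; apply: eq_bigr => i' Hi'.
by rewrite ffunE (negbTE Hi').
Qed.

Lemma main_lemma n k s (T q l : nat -> nat) (f : {ffun 'I_n -> bool} -> bool)
  (HT : forall j : nat, (j < n)%N -> (0 < T j)%N)
  (Hl0 : l 0%N = 0%N) (Hlk : l s = k)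
  (HG1 : forall j : nat, (k <= j < n)%N ->
     forall c1 c2 : {ffun 'I_s -> bool},
       tau T q l c1 = tau T q l c2 %[mod T j] -> c1 = c2)
  (a : {ffun 'I_n -> bool}) (Ha : inVk k a)
  (Hu : forall b : {ffun 'I_n -> bool}, inVk k b ->
        bias (fun x => f x (+) dotb b x) != 0 -> b = a) (t : nat) :
  bias (fun X : Bits n T => PC s q l f X t)
  = (bias (fun x => f x (+) dotb a x)) ^+ (2 ^ s).
Proof.
rewrite bias_PC_formula // (bigD1 [ffun _ => a]) //= [X in _ + X = _]big1 ?addr0; last first.
  move=> phi Hphi; case: ifP => Hm; last by rewrite mulr0.
  rewrite mulr1; apply/eqP; apply: contraTT Hm => Hprod.
  have /existsP [c0 Hc0] : [exists c0, phi c0 != a].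
    apply: contraR Hphi; rewrite negb_exists => /forallP H.
    apply/eqP/ffunP => c; rewrite ffunE; apply/eqP; by have := H c; rewrite negbK.
  have Fc0 : bias (fun x => f x (+) dotb (phi c0) x) != 0.
    by move: Hprod; rewrite prodf_seq_neq0 => /allP /(_ c0 (mem_index_enum _)).
  have Nk : ~~ inVk k (phi c0).
    by apply: contra Hc0 => Hk; rewrite (Hu _ Hk Fc0).
  move: Nk; rewrite /inVk negb_forall => /existsP [j]; rewrite negb_imply negbK.
  case/andP => Hkj Hpj.
  rewrite negb_forall; apply/existsP.
  exists (Tagged (fun j : 'I_n => 'I_(T j)) (Ordinal (@ltn_pmod (t + tau T q l c0) _ (HT j (ltn_ord j))))).
  rewrite negbK ffunE /= (bigD1 c0) //= eqxx Hpj big1 // => c Hc.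
  case E: (_ == _); rewrite ?andbF //.
  move/negP: Hc; case; apply/eqP; apply: (HG1 j); first by rewrite Hkj ltn_ord.
  by apply/eqP; rewrite -(eqn_modDl t).
have -> : \prod_(c : {ffun 'I_s -> bool}) bias (fun x => f x (+) dotb ([ffun _ => a] c) x)
  = bias (fun x => f x (+) dotb a x) ^+ (2 ^ s).
  rewrite (eq_bigr (fun _ => bias (fun x => f x (+) dotb a x))); last first.
    by move=> c _; rewrite ffunE.
  by rewrite prodr_const card_ffun card_bool card_ord.
rewrite (_ : [forall p, _] = true) ?mulr1 //.
apply/forallP => -[j r]; rewrite ffunE /=.
case: (ltnP j k) => Hjk.
  have [i /and3P[Hi H1 H2]] := block_exists Hl0 (leq_trans Hjk (eq_leq (esym Hlk))).
  rewrite (@parity _ (Ordinal Hi)) // => c.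
  rewrite !ffunE -modnDmr (@tau_flip s T q l (Ordinal Hi) j c (@dvd_Mblk T q l i j H1 H2)) modnDmr.
  done.
rewrite big1 // => c _; rewrite ffunE.
by move/forallP: Ha => /(_ j) /implyP /(_ Hjk) /negbTE ->.
Qed.

Lemma card_lt_k n k (Hkn : (k <= n)%N) : (#|[set i : 'I_n | (i < k)%N]| <= k)%N.
Proof.
rewrite -sum1dep_card.
rewrite (eq_bigl (fun i : 'I_n => true && (i < k)%N)) // -(big_ord_widen_cond n xpredT (fun _ => 1%N) Hkn).
by rewrite sum1_card card_ord.
Qed.

Lemma weight_lt n k (Hkn : (k <= n)%N) (b : {ffun 'I_n -> bool}) :
  inVk k b -> b != onek n k -> (hweight b <= k.-1)%N.
Proof.
move=> /forallP Hb Hne.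
have /existsP [i0 Hi0] : [exists i, b i != onek n k i].
  apply: contraR Hne; rewrite negb_exists => /forallP H.
  by apply/eqP/ffunP => i; apply/eqP; have := H i; rewrite negbK.
have Hi0k : (i0 < k)%N.
  rewrite ltnNge; apply/negP => Hk; move: Hi0; rewrite ffunE ltnNge Hk /=.
  by have := Hb i0; rewrite Hk /= => /negbTE ->.
have Hbi0 : b i0 = false by move: Hi0; rewrite ffunE Hi0k; case: (b i0).
have Hp : [set i | b i] \proper [set i : 'I_n | (i < k)%N].
  apply/properP; split.
    apply/subsetP => i; rewrite !inE => Hbi; rewrite ltnNge; apply/negP => Hk.
    by have := Hb i; rewrite Hk Hbi.
  by exists i0; rewrite !inE ?Hbi0 ?Hi0k.
have := leq_trans (proper_card Hp) (card_lt_k Hkn).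
rewrite /hweight; case: (k) => // k'.
Qed.

Set Strict Implicit. Unset Implicit Arguments.

Theorem theorem4 (n k s : nat) (T q l : nat -> nat)
  (f : {ffun 'I_n -> bool} -> bool)
  (HT : forall j : nat, (j < n)%N -> (0 < T j)%N)
  (Hq : forall i : nat, (i < s)%N -> (0 < q i)%N)
  (Hs : (1 <= s)%N)
  (Hl0 : l 0%N = 0%N)
  (Hlinc : forall i : nat, (i < s)%N -> (l i < l i.+1)%N)
  (Hlk : l s = k)
  (Hkn : (k <= n)%N)
  (HG : assumptionG n k s T q l) :
  (forall a : {ffun 'I_n -> bool},
     inVk k a ->
     bias (fun x => f x (+) dotb a x) != 0 ->
     (forall b : {ffun 'I_n -> bool}, inVk k b ->
        bias (fun x => f x (+) dotb b x) != 0 -> b = a) ->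
     forall t : nat,
       bias (fun X : Bits n T => PC s q l f X t)
       = (bias (fun x => f x (+) dotb a x)) ^+ (2 ^ s))
  /\
  (resilient f k.-1 ->
     forall t : nat,
       bias (fun X : Bits n T => PC s q l f X t)
       = (bias (fun x => f x (+) dotb (onek n k) x)) ^+ (2 ^ s)).
Proof.
case: HG => HG1 _; split.
  move=> a Ha _ Hu t; exact: (@main_lemma n k s T q l f HT Hl0 Hlk HG1 a Ha Hu t).
move=> Hres t; apply: (@main_lemma n k s T q l f HT Hl0 Hlk HG1).
  by apply/forallP => i; apply/implyP => Hk; rewrite ffunE -leqNgt.
move=> b Hb HF; apply/eqP; apply: contraR HF => Hne.
by rewrite Hres // weight_lt.
Qed.
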